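(* Assume the matching setting described in the context. Let $M=\{e_1,\ldots,e_k\}$ be a matching and $\sigma_k\in\Omega$ with $M\subseteq\sigma_k$. Run the following procedure: for $i=k,k-1,\ldots,1$, choose an orientation $(u,v)$ of $e_i=\{u,v\}$; select $(u',v')\in\mathcal{N}_{\sigma_i}(u,v)\setminus\overrightarrow{\{e_1,\ldots,e_{i-1}\}}$ uniformly at random; set $\sigma_{i-1}=\mathrm{Swap}_{\sigma_i}((u,v),(u',v'))$. Output $\sigma_0$. Then: (1) the procedure is well defined, in the sense that $e_i\in\sigma_i$ at iteration $i$; (2) it can output $\sigma_0\in\Omega$ if and only if $\hat\psi(M,\sigma_0)=\sigma_k$; (3) distinct executions, i.e. executions differing in the choice of $(u',v')$ for some $i$, produce distinct outputs.
   Context: Let $G=(V,E)$ be an undirected graph with $|V|=2n$ of one of the following two types: [P1] $G$ is the complete graph on $V$; [P2] $V$ is partitioned into sets $A_1,B_1,\ldots,A_r,B_r$ with $|A_i|=|B_i|$ and $E=\{\{u,v\}:u\in A_i,v\in B_i,i\in[r]\}$. In both cases, whenever $(u',u,v,v')$ is a path in $G$ with distinct nodes, $\{u',v'\}\in E$. $\Omega$ is the set of perfect matchings of $G$ (sets of edges). For a single edge $e=\{u,v\}$ and $\sigma\in\Omega$, let $u',v'$ be the nodes with $\{u,u'\},\{v,v'\}\in\sigma$, and set $\hat\psi(\{e\},\sigma)=(\sigma\setminus\{\{u,u'\},\{v,v'\}\})\cup\{\{u,v\},\{u',v'\}\}$. For a matching $M=\{e_1,\ldots,e_k\}$ set $\hat\psi(M,\sigma)=\sigma_k$,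 where $\sigma_0=\sigma$ and $\sigma_i=\hat\psi(\{e_i\},\sigma_{i-1})$; this is independent of the ordering of $M$. For $S\subseteq E$ let $\overrightarrow S=\{(u,v),(v,u):\{u,v\}\in S\}$. For $\sigma\in\Omega$ and $(u,v),(u',v')\in\overrightarrow\sigma$ let $$\mathrm{Swap}_\sigma((u,v),(u',v'))=(\sigma\setminus\{\{u,v\},\{u',v'\}\})\cup\{\{u,u'\},\{v,v'\}\},$$ and let $\mathcal{N}_\sigma(u,v)=\{(u',v')\in\overrightarrow\sigma:\mathrm{Swap}_\sigma((u,v),(u',v'))\in\Omega\}$. *)

(* Defs.v *)
From mathcomp Require Import all_boot.
Set Implicit Arguments. Unset Strict Implicit. Unset Printing Implicit Defensive.

Section Matchings.
Variable V : finType.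

Definition is_P1 (adj : rel V) : Prop := forall u v, adj u v = (u != v).

(* Graph of type [P2]: V partitioned into A_1,B_1,...,A_r,B_r with
   |A_i| = |B_i|; part x = i and side x = true means x \in A_i,
   side x = false means x \in B_i; edges join A_i and B_i. *)
Definition is_P2 (adj : rel V) : Prop :=
  exists (r : nat) (part : V -> 'I_r) (side : V -> bool),
    (forall i : 'I_r, #|[set x | (part x == i) && side x]|
                      = #|[set x | (part x == i) && ~~ side x]|) /\
    (forall u v, adj u v = (part u == part v) && (side u != side v)).

Definition is_edge (adj : rel V) (e : {set V}) : bool :=
  [exists u, exists v, adj u v && (e == [set u; v])].

Definition edge_of (p : V * V) : {set V} := [set p.1; p.2].

Definition is_pm (adj : rel V) (s : {set {set V}}) : bool :=
  [forall e in s, is_edge adj e] && [forall x, #|[set e in s | x \in e]| == 1].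

Definition Omega (adj : rel V) : {set {set {set V}}} := [set s | is_pm adj s].

(* Partner of u in sigma: the w with {u,w} in sigma (u if none). *)
Definition partner (s : {set {set V}}) (u : V) : V :=
  odflt u [pick w | [set u; w] \in s].

Definition psi1 (s : {set {set V}}) (p : V * V) : {set {set V}} :=
  let u := p.1 in let v := p.2 in
  let u' := partner s u in let v' := partner s v in
  (s :\: [set [set u; u']; [set v; v']]) :|: [set [set u; v]; [set u'; v']].

Definition psi (M : seq (V * V)) (s : {set {set V}}) : {set {set V}} :=
  foldl psi1 s M.

Definition arrow (S : {set {set V}}) : {set V * V} :=
  [set p : V * V | [set p.1; p.2] \in S].

Definition Swap (s : {set {set V}}) (uv c : V * V) : {set {set V}} :=
  (s :\: [set [set uv.1; uv.2]; [set c.1; c.2]]) :|: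
  [set [set uv.1; c.1]; [set uv.2; c.2]].

Definition Nbr (adj : rel V) (s : {set {set V}}) (uv : V * V) : {set V * V} :=
  [set c in arrow s | Swap s uv c \in Omega adj].

(* candidates: N_sigma(u,v) \ arrow{e_1,...,e_{i-1}}, es = [e_1;...;e_{i-1}] *)
Definition cand (adj : rel V) (s : {set {set V}}) (uv : V * V)
    (es : seq (V * V)) : {set V * V} :=
  Nbr adj s uv :\: arrow [set edge_of p | p in es].

Definition orient (b : bool) (p : V * V) : V * V := if b then (p.2, p.1) else p.

(* Executions of the procedure.  [trace adj ori es s cs es' s'] : starting at
   iteration i = size es with sigma_i = s, where es = [e_1;...;e_i], the
   sequence of choices cs (in execution order) is admissible and leads to
   the state where es' = [e_1;...;e_j] remain and sigma_j = s'.
   The orientation of e_i chosen at iteration i is given by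
   [orient (ori i sigma_i) e_i], an arbitrary rule. *)
Inductive trace (adj : rel V) (ori : nat -> {set {set V}} -> bool) :
    seq (V * V) -> {set {set V}} -> seq (V * V) -> seq (V * V) ->
    {set {set V}} -> Prop :=
| trace_nil es s : trace adj ori es s [::] es s
| trace_step es p s c cs es' s' :
    c \in cand adj s (orient (ori (size es).+1 s) p) es ->
    trace adj ori es (Swap s (orient (ori (size es).+1 s) p) c) cs es' s' ->
    trace adj ori (rcons es p) s (c :: cs) es' s'.

End Matchings.

(* Main.v *)
Require Import Defs.
From mathcomp Require Import all_boot.
Set Implicit Arguments. Unset Strict Implicit. Unset Printing Implicit Defensive.

Definition Gprop (V : finType) (adj : rel V) :=
  [/\ (forall u v, adj u v = adj v u), (forall u, adj u u = false) &
      (forall a b c d, a != d -> adj a b -> adj b c -> adj c d -> adj a d)].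

Lemma Gprop_of (V : finType) (adj : rel V) : is_P1 adj \/ is_P2 adj -> Gprop adj.
Proof.
case=> [H|[r [part [side [_ H]]]]]; split.
- by move=> u v; rewrite !H eq_sym.
- by move=> u; rewrite H eqxx.
- by move=> a b c d ad _ _ _; rewrite H.
- by move=> u v; rewrite !H eq_sym [side v == _]eq_sym.
- by move=> u; rewrite H !eqxx.
- move=> a b c d _; rewrite !H => /andP[/eqP-> s1] /andP[/eqP-> s2] /andP[/eqP-> s3].
  rewrite eqxx /=; move: s1 s2 s3.
  by case: (side a); case: (side b); case: (side c); case: (side d).
Qed.

Lemma pm_cov (V : finType) (adj : rel V) (s : {set {set V}}) x :
  is_pm adj s -> exists2 e, e \in s & x \in e.
Proof.
move=> /andP[_ /forallP /(_ x) /cards1P [e He]].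
have: e \in [set e0 in s | x \in e0] by rewrite He set11.
rewrite inE => /andP[]; eauto.
Qed.

Lemma pm_uniq (V : finType) (adj : rel V) (s : {set {set V}}) x e e' :
  is_pm adj s -> e \in s -> e' \in s -> x \in e -> x \in e' -> e = e'.
Proof.
move=> /andP[_ /forallP /(_ x) /cards1P [f Hf]] es e's xe xe'.
have H : forall g, g \in s -> x \in g -> g = f.
  by move=> g gs xg; apply/set1P; rewrite -Hf inE gs xg.
by rewrite (H _ es xe) (H _ e's xe').
Qed.

Lemma pm_edge (V : finType) (adj : rel V) (s : {set {set V}}) e :
  is_pm adj s -> e \in s -> is_edge adj e.
Proof. by move=> /andP[/forall_inP H _]; apply: H. Qed.

Lemma pm_intro (V : finType) (adj : rel V) (s : {set {set V}}) :
  (forall e, e \in s -> is_edge adj e) ->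
  (forall x, exists2 e, e \in s & x \in e) ->
  (forall x e e', e \in s -> e' \in s -> x \in e -> x \in e' -> e = e') ->
  is_pm adj s.
Proof.
move=> He Hc Hu; apply/andP; split; first by apply/forall_inP.
apply/forallP => x; apply/cards1P; case: (Hc x) => e es xe; exists e.
apply/setP => f; rewrite !inE; apply/andP/eqP => [[fs xf]|->]; last by [].
exact: (Hu x).
Qed.

Lemma edgeI (V : finType) (adj : rel V) a b : adj a b -> is_edge adj [set a; b].
Proof. by move=> H; apply/existsP; exists a; apply/existsP; exists b; rewrite H eqxx. Qed.

Lemma edgeE (V : finType) (adj : rel V) e : is_edge adj e ->
  exists a b, adj a b /\ e = [set a; b].
Proof. by move/existsP=> [a /existsP[b /andP[H /eqP E]]]; exists a, b. Qed.

Lemma set2_eq (V : finType) (a b c d : V) : [set a; b] = [set c; d] ->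
  (a = c /\ b = d) \/ (a = d /\ b = c).
Proof.
move=> E.
have ha : a \in [set c; d] by rewrite -E !inE eqxx.
have hb : b \in [set c; d] by rewrite -E !inE eqxx orbT.
have hc : c \in [set a; b] by rewrite E !inE eqxx.
have hd : d \in [set a; b] by rewrite E !inE eqxx orbT.
move: ha hb hc hd; rewrite !inE.
by do 4 case/orP=> /eqP ?; subst; auto.
Qed.

Lemma pm_adj (V : finType) (adj : rel V) (s : {set {set V}}) x y : Gprop adj ->
  is_pm adj s -> [set x; y] \in s -> adj x y.
Proof.
case=> sym _ _ pm H; case: (edgeE (pm_edge pm H)) => a [b [ab /set2_eq]].
by case=> [[-> ->]|[-> ->]] //; rewrite sym.
Qed.

Lemma pm_neq (V : finType) (adj : rel V) (s : {set {set V}}) x y : Gprop adj ->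
  is_pm adj s -> [set x; y] \in s -> x != y.
Proof.
move=> G pm H; have := pm_adj G pm H; case: G => _ irr _.
by apply: contraTneq => ->; rewrite irr.
Qed.

Lemma partner_in (V : finType) (adj : rel V) (s : {set {set V}}) u : is_pm adj s ->
  [set u; partner s u] \in s.
Proof.
move=> pm; case: (pm_cov u pm) => e es ue.
case: (edgeE (pm_edge pm es)) => a [b [_ E]]; subst e.
have [w Hw] : exists w, [set u; w] \in s.
  move: ue; rewrite !inE => /orP[]/eqP->; first by exists b.
  by exists a; rewrite setUC.
rewrite /partner; case: pickP => [w' /= -> //|Hn].
by have := Hn w; rewrite Hw.
Qed.

Lemma partner_eq (V : finType) (adj : rel V) (s : {set {set V}}) u c : is_pm adj s ->
  [set u; c] \in s -> partner s u = c.
Proof.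
move=> pm H; have H' := partner_in u pm.
have E := pm_uniq pm H' H (set21 _ _) (set21 _ _).
have hc : c \in [set u; partner s u] by rewrite E set22.
have hp : partner s u \in [set u; c] by rewrite -E set22.
move: hc hp; rewrite !inE => /orP[]/eqP-> /orP[]/eqP //.
Qed.

Lemma set2C (T : finType) (a b : T) : [set a; b] = [set b; a].
Proof. exact: setUC. Qed.

Ltac grind := repeat match goal with
 | H : is_true (_ || _) |- _ => case/orP: H => H
 | H : is_true (_ && _) |- _ => let H1 := fresh "H" in let H2 := fresh "H" in case/andP: H => H1 H2
 | H : is_true (?a == ?b) |- _ => move/eqP: H => H; try subst
 | H : is_true (?a != ?a) |- _ => by rewrite eqxx in H
 | H : is_true (~~ ?b) , H' : is_true ?b |- _ => by rewrite H' in H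
 end.

Lemma psi1_pm (V : finType) (adj : rel V) (s : {set {set V}}) u v :
  Gprop adj -> is_pm adj s -> adj u v -> is_pm adj (psi1 s (u, v)).
Proof.
move=> G pm auv; have [sym irr pth] := G.
rewrite /psi1 /=.
have Hu : [set u; partner s u] \in s := partner_in u pm.
have Hv : [set v; partner s v] \in s := partner_in v pm.
move: (partner s u) (partner s v) Hu Hv => u' v' Hu Hv.
have nuv : u != v by apply: contraTneq auv => ->; rewrite irr.
case: (boolP ([set u; v] \in s)) => Huv.
  have eu : u' = v by have := partner_eq pm Huv; have := partner_eq pm Hu; congruence.
  have ev : v' = u.
    have Hvu : [set v; u] \in s by rewrite set2C.
    by have := partner_eq pm Hvu; have := partner_eq pm Hv; congruence.
  subst; rewrite (set2C v u) setUid setUC. by rewrite setD1K.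
have nuu : u != u' := pm_neq G pm Hu.
have nvv : v != v' := pm_neq G pm Hv.
have nu'v : u' != v by apply: contraNneq Huv => <-.
have nv'u : v' != u by apply: contraNneq Huv => <-; rewrite set2C.
have nu'v' : u' != v'.
  apply: contraNneq nuv => E.
  have E2 := pm_uniq pm Hu Hv (set22 _ _) (etrans (congr1 _ E) (set22 _ _)).
  have : u \in [set v; v'] by rewrite -E2 set21.
  rewrite !inE => /orP[//|/eqP Hx]. by rewrite Hx -E eqxx in nuu.
have auv' : adj u' v'.
  apply: (pth u' u v v') => //; last exact: pm_adj G pm Hv.
  by rewrite sym; exact: pm_adj G pm Hu.
have old : forall f y, f \in s -> f != [set u; u'] -> f != [set v; v'] -> y \in f ->
   [&& y != u, y != v, y != u' & y != v'].
  move=> f y fs f1 f2 yf.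
  apply/and4P; split; apply/eqP => Ey; subst y.
  - by rewrite (pm_uniq pm fs Hu yf (set21 _ _)) eqxx in f1.
  - by rewrite (pm_uniq pm fs Hv yf (set21 _ _)) eqxx in f2.
  - by rewrite (pm_uniq pm fs Hu yf (set22 _ _)) eqxx in f1.
  - by rewrite (pm_uniq pm fs Hv yf (set22 _ _)) eqxx in f2.
apply: pm_intro.
- move=> e; rewrite !inE => /orP[/andP[_ /(pm_edge pm) //]|/orP[]/eqP->]; exact: edgeI.
- move=> x.
  case: (boolP (x \in [set u; v])) => xuv.
    by exists [set u; v]; rewrite // !inE eqxx orbT.
  case: (boolP (x \in [set u'; v'])) => xuv'.
    by exists [set u'; v']; rewrite // !inE eqxx !orbT.
  case: (pm_cov x pm) => e es xe; exists e => //.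
  rewrite !inE es andbT; apply/orP; left; apply/norP; split; apply/eqP => E; subst e;
  by move: xuv xuv' xe; rewrite !inE => /norP[h1 h2] /norP[h3 h4] h5; grind.
- move=> x e e'; rewrite !inE => He He' xe xe'.
  case/orP: He => [/andP[/norP[e1 e2] es]|/orP[]/eqP Ee];
  case/orP: He' => [/andP[/norP[e1' e2'] e's]|/orP[]/eqP Ee'];
  try (by subst); try exact: pm_uniq pm es e's xe xe';
  try (have := old _ _ es e1 e2 xe);
  try (have := old _ _ e's e1' e2' xe');
  subst; move: xe xe'; rewrite !inE => xe xe'; intros; grind.
Qed.

Lemma psi1_orient (V : finType) (s : {set {set V}}) b p :
  psi1 s (orient b p) = psi1 s p.
Proof.
case: b => //; case: p => a b; rewrite /psi1 /=.
by rewrite (set2C b a) (set2C (partner s b)) (set2C [set b; _]).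
Qed.

Lemma orient_edge (V : finType) b (p : V * V) :
  [set (orient b p).1; (orient b p).2] = edge_of p.
Proof. by case: b => //=; rewrite /edge_of set2C. Qed.

Lemma swap_back (T : finType) (s A B : {set T}) : A \subset s ->
  (forall e, e \in s -> e \in B -> e \in A) -> ((s :\: A) :|: B) :\: B :|: A = s.
Proof.
move=> /subsetP sub H; apply/setP => e; rewrite !inE.
case eA: (e \in A); first by rewrite (sub _ eA) orbT.
case eB: (e \in B); case es: (e \in s) => //=.
by rewrite (H _ es eB) in eA.
Qed.

Definition vs (V : finType) (es : seq (V * V)) := flatten [seq [:: p.1; p.2] | p <- es].

Lemma vs_rcons (V : finType) (es : seq (V * V)) p : vs (rcons es p) = vs es ++ [:: p.1; p.2].
Proof. by elim: es => //= a es IH; rewrite /vs /= in IH *; rewrite IH. Qed.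

Lemma mem_vs (V : finType) (es : seq (V * V)) q : q \in es -> (q.1 \in vs es) && (q.2 \in vs es).
Proof.
elim: es => //= a es IH; rewrite inE => /orP[/eqP->|/IH/andP[h1 h2]].
  by rewrite /vs /= !inE !eqxx !orbT.
by rewrite /vs /= !inE -/(vs es) h1 h2 !orbT.
Qed.

Lemma vs_disj (V : finType) (es : seq (V * V)) p q : uniq (vs (rcons es p)) -> q \in es ->
  (p.1 \notin edge_of q) && (p.2 \notin edge_of q).
Proof.
rewrite vs_rcons cat_uniq => /and3P[_ H _] /mem_vs/andP[h1 h2].
move: H => /= /norP[n1 /norP[n2 _]]; rewrite /edge_of.
apply/andP; split; rewrite !inE; apply/negP => /orP[]/eqP E;
  [move: n1|move: n1|move: n2|move: n2]; rewrite E ?h1 ?h2 //.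
Qed.

Lemma vs_prefix (V : finType) (es : seq (V * V)) p : uniq (vs (rcons es p)) -> uniq (vs es).
Proof. by rewrite vs_rcons cat_uniq => /andP[]. Qed.

Definition Inv (V : finType) (adj : rel V) (es : seq (V * V)) (s : {set {set V}}) :=
  [/\ is_pm adj s, (forall q, q \in es -> edge_of q \in s) & uniq (vs es)].

Lemma candE (V : finType) (adj : rel V) s uv c es :
  c \in cand adj s uv es ->
  [/\ [set c.1; c.2] \notin [set edge_of q | q in es], [set c.1; c.2] \in s
    & is_pm adj (Swap s uv c)].
Proof.
by rewrite /cand /Nbr /arrow !inE => /andP[H1 /andP[H2 H3]]; split.
Qed.

Lemma step_inv (V : finType) (adj : rel V) es p s b c :
  Inv adj (rcons es p) s -> c \in cand adj s (orient b p) es ->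
  Inv adj es (Swap s (orient b p) c).
Proof.
case=> pm Hq Hu /candE[Hn Hc Hpm]; split => //; last exact: vs_prefix Hu.
move=> q qes; rewrite /Swap orient_edge !inE.
have qs : edge_of q \in s by apply: Hq; rewrite mem_rcons inE qes orbT.
rewrite qs andbT; apply/orP; left; apply/norP; split.
  case/andP: (vs_disj Hu qes) => n1 _; apply: contraNneq n1 => ->.
  by rewrite /edge_of set21.
apply: contraNneq Hn => <-; exact: imset_f.
Qed.

Lemma swap_inv (V : finType) (adj : rel V) (s : {set {set V}}) u v c :
  is_pm adj s -> [set u; v] \in s -> [set c.1; c.2] \in s ->
  is_pm adj (Swap s (u, v) c) -> psi1 (Swap s (u, v) c) (u, v) = s.
Proof.
case: c => c1 c2 /= pm Huv Hc pm'.
have Pu : partner (Swap s (u, v) (c1, c2)) u = c1.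
  by apply: partner_eq pm' _; rewrite /Swap /= !inE eqxx !orbT.
have Pv : partner (Swap s (u, v) (c1, c2)) v = c2.
  by apply: partner_eq pm' _; rewrite /Swap /= !inE eqxx !orbT.
rewrite /psi1 /= Pu Pv /Swap /=; apply: swap_back.
  by apply/subsetP => e; rewrite !inE => /orP[]/eqP->.
move=> e es; rewrite !inE => /orP[]/eqP E; subst e.
  by rewrite (pm_uniq pm es Huv (set21 _ _) (set21 _ _)) eqxx.
by rewrite (pm_uniq pm es Huv (set21 _ _) (set22 _ _)) eqxx.
Qed.

Lemma inv_back (V : finType) (adj : rel V) es p s b c :
  Inv adj (rcons es p) s -> c \in cand adj s (orient b p) es ->
  psi1 (Swap s (orient b p) c) p = s.
Proof.
case=> pm Hq Hu /candE[Hn Hc Hpm].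
have Hp : edge_of p \in s by apply: Hq; rewrite mem_rcons inE eqxx.
rewrite -(psi1_orient _ b); move: Hpm; rewrite -(orient_edge b) in Hp.
case: (orient b p) Hp => u v /= Hp Hpm.
exact: swap_inv pm Hp Hc Hpm.
Qed.

Lemma psi_rcons (V : finType) (es : seq (V * V)) p s : psi (rcons es p) s = psi1 (psi es s) p.
Proof. by rewrite /psi foldl_rcons. Qed.

Lemma trace_invar (V : finType) (adj : rel V) ori es s cs es' s' :
  trace adj ori es s cs es' s' -> Inv adj es s -> Inv adj es' s'.
Proof.
elim=> // es0 p s0 c cs0 es1 s1 Hc _ IH HI; apply: IH; exact: step_inv HI Hc.
Qed.

Lemma psi_trace (V : finType) (adj : rel V) ori es s cs es' s' :
  trace adj ori es s cs es' s' -> es' = [::] -> Inv adj es s -> psi es s' = s.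
Proof.
elim=> [es0 s0 -> //|es0 p s0 c cs0 es1 s1 Hc _ IH E HI].
by rewrite psi_rcons (IH E (step_inv HI Hc)); exact: inv_back HI Hc.
Qed.

Lemma trace_case (V : finType) (adj : rel V) ori es s cs es' s' :
  trace adj ori es s cs es' s' ->
  (cs = [::] /\ es' = es /\ s' = s) \/
  exists es0 p c cs0, [/\ es = rcons es0 p, cs = c :: cs0,
     c \in cand adj s (orient (ori (size es0).+1 s) p) es0 &
     trace adj ori es0 (Swap s (orient (ori (size es0).+1 s) p) c) cs0 es' s'].
Proof. by case=> [|es0 p s0 c cs0 es1 s1 Hc Ht]; [left|right; exists es0, p, c, cs0]. Qed.

Lemma swap_partner (V : finType) (adj : rel V) (s : {set {set V}}) uv c :
  is_pm adj (Swap s uv c) -> c = (partner (Swap s uv c) uv.1, partner (Swap s uv c) uv.2).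
Proof.
case: c => c1 c2 pm.
rewrite (partner_eq pm (_ : [set uv.1; c1] \in _)); last by rewrite /Swap !inE eqxx !orbT.
rewrite (partner_eq pm (_ : [set uv.2; c2] \in _)) //; by rewrite /Swap !inE eqxx !orbT.
Qed.

Lemma trace_uniq (V : finType) (adj : rel V) ori es s cs es' s0 :
  trace adj ori es s cs es' s0 -> es' = [::] -> Inv adj es s ->
  forall cs', trace adj ori es s cs' [::] s0 -> cs = cs'.
Proof.
elim=> [es1 s1 -> _ cs' /trace_case [[-> _]//|[es0 [p [c [cs0 [E _ _ _]]]]]]|].
  by move/(congr1 size): E; rewrite size_rcons.
move=> es1 p s1 c cs1 es2 s2 Hc Ht IH E HI cs' /trace_case [[_ [E' _]]|].
  by move/(congr1 size): E'; rewrite size_rcons.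
move=> [es0 [p0 [c' [cs0 [E' -> Hc' Ht']]]]].
case/rcons_inj: E' => ??; subst es0 p0.
have HI' := step_inv HI Hc.
have S1 := psi_trace Ht E HI'.
have HI'' := step_inv HI Hc'.
have S2 := psi_trace Ht' erefl HI''.
have Ecc : c = c'.
  case: HI' => pm1 _ _; case: HI'' => pm2 _ _.
  by rewrite (swap_partner pm1) (swap_partner pm2) -S1 -S2.
subst c'; congr (_ :: _); exact: IH.
Qed.

Lemma psi_pm (V : finType) (adj : rel V) (es : seq (V * V)) s : Gprop adj ->
  is_pm adj s -> all (fun p => adj p.1 p.2) es -> is_pm adj (psi es s).
Proof.
rewrite /psi => G; elim: es s => //= p es IH s pm /andP[ap aes]; apply: IH => //.
by case: p ap => u v ap; exact: psi1_pm.
Qed.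

Lemma psi1_keep (V : finType) (s : {set {set V}}) e p :
  e \in s -> p.1 \notin e -> p.2 \notin e -> e \in psi1 s p.
Proof.
rewrite /psi1 /= !inE => es n1 n2; rewrite es andbT; apply/orP; left; apply/norP; split.
  by apply: contraNneq n1 => ->; exact: set21.
by apply: contraNneq n2 => ->; exact: set21.
Qed.

Lemma psi_edges (V : finType) (es : seq (V * V)) s0 q :
  uniq (vs es) -> q \in es -> edge_of q \in psi es s0.
Proof.
elim/last_ind: es => // es p IH Hu; rewrite mem_rcons inE psi_rcons => /orP[/eqP->|qes].
  by rewrite /psi1 /= !inE /edge_of eqxx !orbT.
case/andP: (vs_disj Hu qes) => n1 n2; apply: psi1_keep => //; exact: IH (vs_prefix Hu) qes.
Qed.

Lemma swap_fwd (V : finType) (adj : rel V) (s' : {set {set V}}) u v : is_pm adj s' ->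
  Swap (psi1 s' (u, v)) (u, v) (partner s' u, partner s' v) = s'.
Proof.
move=> pm; have Hu := partner_in u pm; have Hv := partner_in v pm.
rewrite /psi1 /Swap /=; move: (partner s' u) (partner s' v) Hu Hv => u' v' Hu Hv.
apply: swap_back; first by apply/subsetP => e; rewrite !inE => /orP[]/eqP->.
move=> e es; rewrite !inE => /orP[]/eqP E; subst e.
  by rewrite (pm_uniq pm es Hu (set21 _ _) (set21 _ _)) eqxx.
by rewrite (pm_uniq pm es Hu (set21 _ _) (set22 _ _)) eqxx.
Qed.

Lemma key (V : finType) (adj : rel V) (s' : {set {set V}}) es p b :
  is_pm adj s' -> (forall q, q \in es -> edge_of q \in s') ->
  uniq (vs (rcons es p)) ->
  let uv := orient b p in
  let c := (partner s' uv.1, partner s' uv.2) in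
  c \in cand adj (psi1 s' p) uv es /\ Swap (psi1 s' p) uv c = s'.
Proof.
move=> pm Hq Hu uv c.
have Esw : Swap (psi1 s' p) uv c = s'.
  by rewrite -(psi1_orient s' b) /c /uv; case: (orient b p) => u v; exact: swap_fwd pm.
have Hin : [set c.1; c.2] \in psi1 s' p.
  by rewrite -(psi1_orient s' b) /c /uv; case: (orient b p) => u v; rewrite /psi1 /= !inE eqxx !orbT.
split=> //; apply/setDP; split.
  rewrite /Nbr inE; apply/andP; split; first by rewrite /arrow inE.
  by rewrite /Omega inE Esw.
rewrite /arrow inE; apply/negP => /imsetP [q qes E].
have uin : uv.1 \in edge_of p by rewrite -(orient_edge b) set21.
have Hpu := partner_in uv.1 pm.
have E2 : [set uv.1; partner s' uv.1] = edge_of q.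
  apply: (pm_uniq pm Hpu (Hq q qes) (set22 _ _)); by rewrite -E set21.
have : uv.1 \in edge_of q by rewrite -E2 set21.
case/andP: (vs_disj Hu qes) => n1 n2.
have : uv.1 = p.1 \/ uv.1 = p.2 by move: uin; rewrite /edge_of !inE => /orP[]/eqP; auto.
by case=> ->; [rewrite (negPf n1)|rewrite (negPf n2)].
Qed.

Lemma back (V : finType) (adj : rel V) ori (s0 : {set {set V}}) es : Gprop adj ->
  is_pm adj s0 -> all (fun p => adj p.1 p.2) es -> uniq (vs es) ->
  exists cs, trace adj ori es (psi es s0) cs [::] s0.
Proof.
move=> G pm0; elim/last_ind: es => [_ _|es p IH]; first by exists [::]; exact: trace_nil.
rewrite all_rcons => /andP[ap aes] Hu.
case: (IH aes (vs_prefix Hu)) => cs Ht.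
have pm' := psi_pm G pm0 aes.
have Hq : forall q, q \in es -> edge_of q \in psi es s0.
  move=> q; exact: psi_edges (vs_prefix Hu).
rewrite psi_rcons.
set b := ori (size es).+1 (psi1 (psi es s0) p).
have [Hc HS] := key b pm' Hq Hu.
exists ((partner (psi es s0) (orient b p).1, partner (psi es s0) (orient b p).2) :: cs).
apply: trace_step => //; by rewrite HS.
Qed.

Theorem proposition7 (V : finType) (n : nat) (adj : rel V)
  (ori : nat -> {set {set V}} -> bool)
  (M : seq (V * V)) (sk : {set {set V}}) :
  #|V| = n.*2 ->
  (is_P1 adj \/ is_P2 adj) ->
  (* M = {e_1,...,e_k} is a matching, e_i = {(nth M (i-1)).1, (nth M (i-1)).2} *)
  all (fun p => adj p.1 p.2) M ->
  uniq (flatten [seq [:: p.1; p.2] | p <- M]) ->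
  is_pm adj sk ->
  all (fun p => edge_of p \in sk) M ->
  (* (1) well defined: e_i in sigma_i at iteration i *)
  (forall cs es p s, trace adj ori M sk cs (rcons es p) s -> edge_of p \in s) /\
  (* (2) possible outputs *)
  (forall s0, is_pm adj s0 ->
     ((exists cs, trace adj ori M sk cs [::] s0) <-> psi M s0 = sk)) /\
  (* (3) distinct executions give distinct outputs *)
  (forall cs cs' s0, trace adj ori M sk cs [::] s0 ->
     trace adj ori M sk cs' [::] s0 -> cs = cs').
Proof.
move=> _ /Gprop_of G aM uM pmk eM.
have HI : Inv adj M sk.
  by split=> // q qM; exact: (allP eM).
split; [|split].
- move=> cs es p s Ht; case: (trace_invar Ht HI) => _ Hq _.
  by apply: Hq; rewrite mem_rcons inE eqxx.
- move=> s0 pm0; split.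
    by case=> cs Ht; exact: psi_trace Ht erefl HI.
  by move=> <-; exact: back.
- by move=> cs cs' s0 Ht Ht'; exact: trace_uniq Ht erefl HI _ Ht'.
Qed.
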